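(* Let $n,k$ be positive integers with $n \geq 3(n-k)$ and $n\geq k$, and let $C\in\mathcal{K}_{k+1}(n+1)$. Let $M=\{k+2,k+3,\dots,2n-k+1\}$, and let $S_C$ be the set of chords of $C$ having neither their start point nor their end point in $M$. Let $a$ be the chord of $C$ whose end point is $2n-k+2$. Let $m$ be the number of chords $b\in S_C$ with $s_b<s_a$. Then $m<n-k+1$.
   Context: A linear chord diagram of size $n$ is a partition of $\{1,2,\dots,2n\}$ into blocks of size two, called chords. For a chord $c=\{s_c,e_c\}$ with $s_c<e_c$, $s_c$ is its start point, $e_c$ its end point, and its length is $e_c-s_c$. $\mathcal{K}_k(n)$ is the set of all linear chord diagrams of size $n$ in which every chord has length at least $k$. (Under the hypotheses, $2n-k+2$ is an end point of some chord of $C$.) *)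

(* Defs.v *)
From mathcomp Require Import all_boot.
Set Implicit Arguments. Unset Strict Implicit. Unset Printing Implicit Defensive.

(* A linear chord diagram of size n is a (duplicate-free) list of chords whose
   endpoints, taken together, are exactly {1, ..., 2n}, each once; i.e. the
   list of chords is a partition of {1..2n} into blocks of size two.
   The order of the list is irrelevant. *)
Definition chord := (nat * nat)%type.
Definition start (c : chord) : nat := c.1.
Definition endp (c : chord) : nat := c.2.
Definition chord_length (c : chord) : nat := endp c - start c.

Definition points (C : seq chord) : seq nat :=
  flatten [seq [:: start c; endp c] | c <- C].

Definition is_lcd (n : nat) (C : seq chord) : Prop :=
  all (fun c => start c < endp c) C /\ perm_eq (points C) (iota 1 (2 * n)).

Definition in_K (k n : nat) (C : seq chord) : Prop :=
  is_lcd n C /\ all (fun c => k <= chord_length c) C.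

(* Main.v *)
Require Import Defs.
From mathcomp Require Import all_boot zify.

Lemma count_split (T : eqType) (p q r : pred T) (s : seq T) :
  (forall x, x \in s -> p x = q x + r x :> nat) -> count p s = count q s + count r s.
Proof.
elim: s => //= x s IH H.
rewrite IH; last by move=> y ys; apply: H; rewrite inE ys orbT.
have := H x (mem_head _ _). lia.
Qed.

Lemma count_le4 (T : eqType) (p q r t : pred T) (s : seq T) :
  (forall x, x \in s -> p x + q x + r x <= t x) ->
  count p s + count q s + count r s <= count t s.
Proof.
elim: s => //= x s IH H.
have : count p s + count q s + count r s <= count t s.
  by apply: IH => y ys; apply: H; rewrite inE ys orbT.
have := H x (mem_head _ _). lia.
Qed.

Lemma cnt_lt h s N : count (fun x => x < h) (iota s N) = minn (h - s) N.
Proof.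
elim: N s => [|N IH] s /=; first by rewrite minn0.
rewrite IH; case: (ltnP s h) => H /=; lia.
Qed.

Lemma count_points (p : pred nat) C :
  count p (points C) = count (fun c => p (start c)) C + count (fun c => p (endp c)) C.
Proof.
elim: C => //= c C IH. rewrite /points /= in IH *. rewrite IH. lia.
Qed.

Lemma mem_points C c x : c \in C -> (x == start c) || (x == endp c) -> x \in points C.
Proof.
elim: C => //= d C IH; rewrite inE => /orP [/eqP -> | cC] Hx.
  rewrite /points /= !inE. case/orP: Hx => -> //; by rewrite orbT.
rewrite /points /= !inE. by rewrite (IH cC Hx) !orbT.
Qed.

Theorem lemma3 (n k : nat) (C : seq chord) (a : chord) :
  0 < n -> 0 < k -> 3 * (n - k) <= n -> k <= n ->
  in_K k.+1 n.+1 C ->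
  a \in C -> endp a = 2 * n - k + 2 ->
  let inM := fun x : nat => (k + 2 <= x) && (x <= 2 * n - k + 1) in
  let S_C := [seq b <- C | ~~ inM (start b) && ~~ inM (endp b)] in
  let m := count (fun b => start b < start a) S_C in
  m < n - k + 1.
Proof.
move=> n0 k0 h3 hkn [[Hlt Hperm] Hlen] aC Ea; cbv zeta.
set inM := fun x : nat => (k + 2 <= x) && (x <= 2 * n - k + 1).
rewrite count_filter.
have Hcnt : forall p : pred nat, count p (points C) = count p (iota 1 (2 * n.+1)).
  by move=> p; apply/permP.
have Hb : forall c, c \in C -> [/\ 1 <= start c, endp c <= 2 * n.+1 & start c + k.+1 <= endp c].
  move=> c cC.
  have Hs : start c \in iota 1 (2 * n.+1).
    by rewrite -(perm_mem Hperm); apply: (mem_points _ _ _ cC); rewrite eqxx.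
  have He : endp c \in iota 1 (2 * n.+1).
    by rewrite -(perm_mem Hperm); apply: (mem_points _ _ _ cC); rewrite eqxx orbT.
  rewrite !mem_iota in Hs He.
  have := allP Hlt c cC. have := allP Hlen c cC. rewrite /chord_length.
  move: Hs He. move=> /andP[? ?] /andP[? ?] ? ?. split; lia.
pose L := fun x : nat => x < k + 2.
pose Mp := fun x : nat => (k + 2 <= x) && (x < 2 * n - k + 2).
pose R := fun x : nat => ~~ (x < 2 * n - k + 2).
have CL := Hcnt L. have CM := Hcnt Mp. have CR := Hcnt R.
rewrite !count_points in CL CM CR.
have IL : count L (iota 1 (2 * n.+1)) = k + 1.
  rewrite /L cnt_lt. lia.
have IM : count Mp (iota 1 (2 * n.+1)) = 2 * (n - k).
  have E : count (fun x => x < 2 * n - k + 2) (iota 1 (2 * n.+1)) = count L (iota 1 (2 * n.+1)) + count Mp (iota 1 (2 * n.+1)).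
    apply: count_split => x _; rewrite /L /Mp /=; lia.
  move: E; rewrite /L !cnt_lt. lia.
have IR : count R (iota 1 (2 * n.+1)) = k + 1.
  have E : count predT (iota 1 (2 * n.+1)) = count (fun x => x < 2 * n - k + 2) (iota 1 (2 * n.+1)) + count R (iota 1 (2 * n.+1)).
    apply: count_split => x _; rewrite /R /=; by case: (x < _).
  move: E; rewrite count_predT size_iota cnt_lt. lia.
have eL0 : count (fun c => L (endp c)) C = 0.
  rewrite -(count_pred0 C); apply: eq_in_count => c cC; have := Hb c cC.
  rewrite /L /=. case=> *. apply/negbTE. lia.
have sR0 : count (fun c => R (start c)) C = 0.
  rewrite -(count_pred0 C); apply: eq_in_count => c cC; have := Hb c cC.
  rewrite /R /=. case=> *. apply/negbTE. lia.
have S1 : size C = count (fun c => L (start c)) C + count (fun c => Mp (start c)) C.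
  rewrite -count_predT; apply: count_split => c cC; have := Hb c cC.
  rewrite /L /Mp /=. case=> *. lia.
have S2 : size C = count (fun c => Mp (endp c)) C + count (fun c => R (endp c)) C.
  rewrite -count_predT; apply: count_split => c cC; have := Hb c cC.
  rewrite /R /Mp /=. case=> *. lia.
have eMd : count (fun c => Mp (endp c)) C = n - k by lia.
have Ha := Hb a aC.
have Hfin := @count_le4 _ (predI (fun b : chord => start b < start a) (fun b : chord => ~~ inM (start b) && ~~ inM (endp b)))
   (fun c => Mp (endp c)) (pred1 a) (fun c => start c < 2 * (n - k) + 2) C.
have CT := Hcnt (fun x => x < 2 * (n - k) + 2).
rewrite count_points cnt_lt in CT.
have : 0 < count (pred1 a) C by rewrite -has_count has_pred1.
suff : count (predI (fun b : chord => start b < start a) (fun b : chord => ~~ inM (start b) && ~~ inM (endp b))) C +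
   count (fun c => Mp (endp c)) C + count (pred1 a) C <= count (fun c => start c < 2 * (n - k) + 2) C.
  move=> ? ?; lia.
apply: Hfin => c cC. have := Hb c cC.
rewrite /inM /Mp /=. case: Ha => ? ? ?. case=> ? ? ?.
case: (eqVneq c a) => [->|_] /=; lia.
Qed.
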